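(* Let $s>0$, $x_0>0$, and let $P:[0,\infty)\to\mathbb{R}$ be a $\mathcal{C}^2$, strictly increasing function with $P(0)=0$, $P(x)>0$ for $x>0$, satisfying $\int_{x_0}^{\infty}P(z)z^{-1-2/s}\,dz<\infty$. Let $\gamma_c(x)=\frac{\sqrt{1+4P(x)}-1}{2}$ and consider the solution of \[ \frac{d\gamma_1}{dx}=\frac{\gamma_1(x)+\gamma_1(x)^2-P(x)}{s\,x\,\gamma_1(x)},\qquad \gamma_1(x_0)=\gamma_0, \] with $0<\gamma_0<\gamma_c(x_0)$. Then there is a finite $x_1>x_0$ such that $\gamma_1(x_1)=0$, i.e. the positive solution on $[x_0,\infty)$ ceases to exist at $x_1$ with $\gamma_1(x)\to0$ as $x\to x_1^-$.
   Context: Solutions are taken in the region $x>0$, $\gamma_1>0$ where the right-hand side is regular, as the unique maximal such solution. *)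

(* Defs.v *)
From Stdlib Require Import Reals.
From Coquelicot Require Export Coquelicot.
Export Reals.
Open Scope R_scope.

(* P is C^2 on [0, oo) (P is a total function R -> R; derivatives are
   two-sided). *)
Definition C2_on_nonneg (P : R -> R) : Prop :=
  forall x, 0 <= x ->
    ex_derive P x /\ ex_derive (Derive P) x /\
    continuous (Derive (Derive P)) x.

Definition strictly_increasing_nonneg (P : R -> R) : Prop :=
  forall x y, 0 <= x -> x < y -> P x < P y.

Definition gamma_c (P : R -> R) (x : R) : R := (sqrt (1 + 4 * P x) - 1) / 2.

Definition ode_rhs (P : R -> R) (s x g : R) : R :=
  (g + g ^ 2 - P x) / (s * x * g).

Definition is_pos_solution (P : R -> R) (s x0 g0 : R) (g : R -> R) (b : Rbar)
  : Prop :=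
  Rbar_lt x0 b /\ g x0 = g0 /\ filterlim g (at_right x0) (locally g0) /\
  forall x, x0 < x -> Rbar_lt x b ->
    0 < g x /\ is_derive g x (ode_rhs P s x (g x)).

(* Main.v *)
Require Import Defs.
From Stdlib Require Import Reals.
From Coquelicot Require Import Coquelicot.
From Stdlib Require Import Lra Psatz Ranalysis5.
Open Scope R_scope.


Lemma cont_eps (f : R -> R) t :
  (forall eps, 0 < eps -> exists d, 0 < d /\ forall s, Rabs (s - t) < d -> Rabs (f s - f t) < eps) ->
  continuous f t.
Proof.
intros H. apply filterlim_locally. intros eps.
destruct (H eps (cond_pos eps)) as [d [Hd H']]. exists (mkposreal d Hd).
intros s Hs. apply H'. exact Hs.
Qed.

Lemma eps_cont (f : R -> R) t : continuous f t ->
  forall eps, 0 < eps -> exists d, 0 < d /\ forall s, Rabs (s - t) < d -> Rabs (f s - f t) < eps.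
Proof.
intros H eps He. destruct (proj1 (filterlim_locally _ _) H (mkposreal eps He)) as [d Hd].
exists d. split. apply cond_pos. intros s Hs. apply (Hd s Hs).
Qed.

Lemma lip_cont (f : R -> R) K : (forall a b, Rabs (f a - f b) <= K * Rabs (a - b)) -> forall t, continuous f t.
Proof.
intros H t. apply cont_eps. intros eps He. exists (eps / (Rabs K + 1)).
assert (0 < Rabs K + 1) by (pose proof (Rabs_pos K); lra).
split. apply Rdiv_lt_0_compat; lra.
intros s Hs. eapply Rle_lt_trans. apply H.
apply Rle_lt_trans with ((Rabs K + 1) * Rabs (s - t)).
apply Rmult_le_compat_r. apply Rabs_pos. pose proof (Rle_abs K); lra.
apply Rmult_lt_reg_l with (/ (Rabs K + 1)). apply Rinv_0_lt_compat; lra.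
rewrite <- Rmult_assoc, Rinv_l by lra. rewrite Rmult_1_l. unfold Rdiv in Hs. lra.
Qed.

Lemma RInt_deriv (g : R -> R) t : (forall x, continuous g x) -> is_derive (fun t => RInt g 0 t) t (g t).
Proof.
intros Hg. apply (is_derive_RInt g (fun t => RInt g 0 t) 0 t). apply filter_forall. intros b.
apply (RInt_correct (V := R_CompleteNormedModule)), ex_RInt_continuous. intros; apply Hg. apply Hg.
Qed.

Lemma exR (g : R -> R) a b : (forall x, continuous g x) -> ex_RInt g a b.
Proof. intros H. apply (ex_RInt_continuous (V := R_CompleteNormedModule)). intros; apply H. Qed.

Lemma RInt_minusR (f g : R -> R) a b : ex_RInt f a b -> ex_RInt g a b ->
  RInt (fun x => f x - g x) a b = RInt f a b - RInt g a b.
Proof. intros H1 H2. exact (RInt_minus f g a b H1 H2). Qed.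

Lemma RInt_bound (g : R -> R) a b K : (forall x, continuous g x) -> (forall x, Rabs (g x) <= K) ->
  Rabs (RInt g a b) <= K * Rabs (b - a).
Proof.
intros Hc Hb. destruct (Rle_dec a b) as [h|h].
- rewrite (Rabs_right (b - a)) by lra. rewrite Rmult_comm. apply abs_RInt_le_const; auto.
  apply exR, Hc.
- rewrite <- opp_RInt_swap. unfold opp; simpl. rewrite Rabs_Ropp.
  rewrite (Rabs_left (b - a)) by lra. replace (- (b - a)) with (a - b) by ring.
  rewrite Rmult_comm. apply abs_RInt_le_const; auto. lra.
  apply exR, Hc.
  apply exR, Hc.
Qed.

Lemma Rabs_sub_le a b : Rabs (a - b) <= Rabs a + Rabs b.
Proof. unfold Rminus. eapply Rle_trans. apply Rabs_triang. rewrite Rabs_Ropp. lra. Qed.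

Lemma addK y (I : R) : I = y + I - y.
Proof. ring. Qed.

Lemma pow2_ge n : INR n <= 2 ^ n.
Proof.
induction n. simpl; lra. rewrite S_INR. simpl.
assert (1 <= 2 ^ n) by (apply pow_R1_Rle; lra). lra.
Qed.

Lemma small_geom K eps : 0 < eps -> exists N, K / 2 ^ N < eps.
Proof.
intros He. destruct (INR_archimed eps K He) as [N HN]. exists N.
assert (0 < 2 ^ N) by (apply pow_lt; lra).
pose proof (pow2_ge N).
apply Rmult_lt_reg_r with (2 ^ N). lra. unfold Rdiv. rewrite Rmult_assoc, Rinv_l by lra.
rewrite Rmult_1_r. nra.
Qed.

Lemma zero_geom D K : (forall n, Rabs D <= K / 2 ^ n) -> D = 0.
Proof.
intros H. destruct (Req_dec D 0) as [|h]; auto.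
assert (0 < Rabs D) by (apply Rabs_pos_lt; auto).
destruct (small_geom K (Rabs D) H0) as [N HN]. specialize (H N). lra.
Qed.

Lemma le_geom a b K : (forall n, a <= b + K / 2 ^ n) -> a <= b.
Proof.
intros H. destruct (Rle_dec a b) as [|h]; auto.
destruct (small_geom K (a - b)) as [N HN]. lra. specialize (H N). lra.
Qed.

Section Picard.
Variable F : R -> R -> R.
Variables y0 L B : R.
Hypothesis HL : 0 < L.
Hypothesis HB : forall t y, Rabs (F t y) <= B.
Hypothesis HLip : forall t y1 y2, Rabs (F t y1 - F t y2) <= L * Rabs (y1 - y2).
Hypothesis HC : forall y t, continuous (fun t => F t y) t.

Lemma Fcomp_cont u t : continuous u t -> continuous (fun s => F s (u s)) t.
Proof.
intros Hu. apply cont_eps. intros eps He.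
destruct (eps_cont _ _ (HC (u t) t) (eps/2)) as [d1 [Hd1 H1]]. lra.
destruct (eps_cont _ _ Hu (eps/(2*L))) as [d2 [Hd2 H2]].
apply Rdiv_lt_0_compat; lra.
exists (Rmin d1 d2). split. apply Rmin_pos; auto.
intros s Hs. assert (Hs1 : Rabs (s - t) < d1) by (pose proof (Rmin_l d1 d2); lra).
assert (Hs2 : Rabs (s - t) < d2) by (pose proof (Rmin_r d1 d2); lra).
specialize (H1 s Hs1). specialize (H2 s Hs2). simpl in H1.
replace (F s (u s) - F t (u t)) with ((F s (u s) - F s (u t)) + (F s (u t) - F t (u t))) by ring.
eapply Rle_lt_trans. apply Rabs_triang.
assert (Rabs (F s (u s) - F s (u t)) < eps / 2).
{ eapply Rle_lt_trans. apply HLip.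
  apply Rmult_lt_reg_l with (/ L). apply Rinv_0_lt_compat; lra.
  rewrite <- Rmult_assoc, Rinv_l by lra. rewrite Rmult_1_l.
  replace (/ L * (eps / 2)) with (eps / (2 * L)) by (field; lra). exact H2. }
lra.
Qed.

Fixpoint pic (n : nat) (t : R) : R :=
  match n with O => y0 | S n => y0 + RInt (fun s => F s (pic n s)) 0 t end.

Lemma pic_cont n t : continuous (pic n) t.
Proof.
revert t. induction n; intros t; simpl.
- apply continuous_const.
- apply (continuous_plus (fun _ => y0) (fun t => RInt (fun s => F s (pic n s)) 0 t)).
  apply continuous_const. apply ex_derive_continuous. eexists. apply RInt_deriv.
  intros x. apply Fcomp_cont. apply IHn.
Qed.

Lemma Fpic_cont n x : continuous (fun s => F s (pic n s)) x.
Proof. apply Fcomp_cont, pic_cont. Qed.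

Lemma ex_Fpic n a b : ex_RInt (fun s => F s (pic n s)) a b.
Proof. apply exR. intros; apply Fpic_cont. Qed.

Lemma pic_lip n t t' : Rabs (pic n t - pic n t') <= B * Rabs (t - t').
Proof.
destruct n; simpl.
- replace (y0 - y0) with 0 by ring. rewrite Rabs_R0. pose proof (Rabs_pos (F 0 0)).
  pose proof (HB 0 0). pose proof (Rabs_pos (t - t')). nra.
- replace (y0 + RInt (fun s => F s (pic n s)) 0 t - (y0 + RInt (fun s => F s (pic n s)) 0 t'))
   with (RInt (fun s => F s (pic n s)) t' t).
  apply RInt_bound. apply Fpic_cont. auto.
  rewrite <- (RInt_Chasles _ t' 0 t) by apply ex_Fpic.
  rewrite <- (opp_RInt_swap _ 0 t') by apply ex_Fpic.
  unfold plus, opp; simpl. ring.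
Qed.

Definition W t := B / (2 * L) * exp (2 * L * t).

Lemma W_pos t : 0 <= W t.
Proof.
unfold W. apply Rmult_le_pos. apply Rmult_le_pos.
pose proof (Rabs_pos (F 0 0)). pose proof (HB 0 0). lra.
left; apply Rinv_0_lt_compat; lra. left; apply exp_pos.
Qed.

Lemma W_mono t t' : t <= t' -> W t <= W t'.
Proof.
intros h. unfold W. apply Rmult_le_compat_l.
apply Rmult_le_pos. pose proof (Rabs_pos (F 0 0)). pose proof (HB 0 0). lra.
left; apply Rinv_0_lt_compat; lra.
destruct (Req_dec t t'). subst; lra. left; apply exp_increasing. nra.
Qed.

Lemma int_exp t K : is_RInt (fun s => K * exp (2 * L * s)) 0 t (K / (2 * L) * (exp (2 * L * t) - 1)).
Proof.
replace (K / (2 * L) * (exp (2 * L * t) - 1)) with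
  (minus (K / (2 * L) * exp (2 * L * t)) (K / (2 * L) * exp (2 * L * 0))).
2:{ unfold minus, plus, opp; simpl. rewrite Rmult_0_r, exp_0. ring. }
apply (is_RInt_derive (fun s => K / (2 * L) * exp (2 * L * s))).
- intros x _. auto_derive. auto. field. lra.
- intros x _. apply (ex_derive_continuous (fun s => K * exp (2 * L * s))). auto_derive. auto.
Qed.

Lemma pic_step n t : 0 <= t -> Rabs (pic (S n) t - pic n t) <= W t / 2 ^ n.
Proof.
intros Ht. induction n as [|n IH] in t, Ht |- *.
- simpl. replace (y0 + RInt (fun s => F s y0) 0 t - y0) with (RInt (fun s => F s y0) 0 t) by (apply addK).
  eapply Rle_trans. apply (RInt_bound _ _ _ B). intros; apply HC. auto.
  rewrite Rminus_0_r, Rabs_right by lra. unfold W.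
  assert (2 * L * t < exp (2 * L * t)).
  { destruct (Req_dec (2 * L * t) 0) as [e|e]. rewrite e, exp_0; lra.
    pose proof (exp_ineq1 _ e). lra. }
  pose proof (Rabs_pos (F 0 0)). pose proof (HB 0 0).
  apply Rle_trans with (B * (exp (2 * L * t) / (2 * L))).
  2:{ right. simpl. field. lra. }
  apply Rmult_le_compat_l. lra.
  apply Rmult_le_reg_r with (2 * L). lra. unfold Rdiv. rewrite Rmult_assoc, Rinv_l by lra. lra.
- change (pic (S (S n)) t - pic (S n) t) with
   (y0 + RInt (fun s => F s (pic (S n) s)) 0 t - (y0 + RInt (fun s => F s (pic n s)) 0 t)).
  replace (y0 + RInt (fun s => F s (pic (S n) s)) 0 t - (y0 + RInt (fun s => F s (pic n s)) 0 t))
    with (RInt (fun s => minus (F s (pic (S n) s)) (F s (pic n s))) 0 t).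
  2:{ rewrite (RInt_minus (fun s => F s (pic (S n) s)) (fun s => F s (pic n s))) by apply ex_Fpic. unfold minus, plus, opp; simpl; ring. }
  set (K := L * (B / (2 * L)) / 2 ^ n).
  apply Rle_trans with (K / (2 * L) * (exp (2 * L * t) - 1)).
  + apply (norm_RInt_le (V := R_NormedModule) (fun s => minus (F s (pic (S n) s)) (F s (pic n s))) (fun s => K * exp (2 * L * s)) 0 t); auto.
    * intros x Hx. eapply Rle_trans. apply HLip. specialize (IH x (proj1 Hx)).
      unfold K. unfold W in IH. apply Rle_trans with (L * (B / (2 * L) * exp (2 * L * x) / 2 ^ n)).
      apply Rmult_le_compat_l; lra. right. assert (2 ^ n <> 0) by (apply pow_nonzero; lra). field. split; auto; lra.
    * apply (RInt_correct (V:=R_CompleteNormedModule)). apply (ex_RInt_minus (V:=R_NormedModule)); apply ex_Fpic.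
    * apply int_exp.
  + unfold K, W. simpl.
    assert (0 < 2 ^ n) by (apply pow_lt; lra).
    pose proof (Rabs_pos (F 0 0)). pose proof (HB 0 0). pose proof (exp_pos (2 * L * t)).
    replace (L * (B / (2 * L)) / 2 ^ n / (2 * L) * (exp (2 * L * t) - 1))
      with (B / (2 * L) * exp (2 * L * t) / (2 * 2 ^ n) - B / (2 * L) / (2 * 2 ^ n)) by (field; lra).
    assert (0 <= B / (2 * L) / (2 * 2 ^ n)).
    { apply Rmult_le_pos. apply Rmult_le_pos. lra. left; apply Rinv_0_lt_compat; lra.
      left; apply Rinv_0_lt_compat; lra. }
    lra.
Qed.

Lemma pic_cauchy n k t : 0 <= t -> Rabs (pic (n + k) t - pic n t) <= 2 * W t / 2 ^ n - 2 * W t / 2 ^ (n + k).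
Proof.
intros Ht. induction k.
- rewrite Nat.add_0_r. replace (pic n t - pic n t) with 0 by ring. rewrite Rabs_R0. lra.
- replace (pic (n + S k) t - pic n t) with ((pic (S (n + k)) t - pic (n + k) t) + (pic (n + k) t - pic n t))
   by (rewrite Nat.add_succ_r; ring).
  eapply Rle_trans. apply Rabs_triang. pose proof (pic_step (n + k) t Ht).
  rewrite Nat.add_succ_r. change (2 ^ S (n + k)) with (2 * 2 ^ (n + k)).
  assert (0 < 2 ^ (n + k)) by (apply pow_lt; lra).
assert (0 < 2 ^ n) by (apply pow_lt; lra).   replace (2 * W t / 2 ^ n - 2 * W t / (2 * 2 ^ (n + k))) with
    (2 * W t / 2 ^ n - 2 * W t / 2 ^ (n + k) + W t / 2 ^ (n + k)) by (field; lra).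
  lra.
Qed.

Lemma pic_cauchy' n m t : 0 <= t -> (n <= m)%nat -> Rabs (pic m t - pic n t) <= 2 * W t / 2 ^ n.
Proof.
intros Ht Hm. replace m with (n + (m - n))%nat by lia.
eapply Rle_trans. apply pic_cauchy; auto.
assert (0 < 2 ^ (n + (m - n))) by (apply pow_lt; lra). pose proof (W_pos t).
assert (0 <= 2 * W t / 2 ^ (n + (m - n))).
{ apply Rmult_le_pos. lra. left; apply Rinv_0_lt_compat; lra. }
lra.
Qed.

Lemma pic_ex_lim t : 0 <= t -> ex_finite_lim_seq (fun n => pic n t).
Proof.
intros Ht. apply ex_lim_seq_cauchy_corr. intros eps.
destruct (small_geom (4 * W t) eps) as [N HN]. apply cond_pos.
exists N. intros n m Hn Hm.
assert (Hb : forall k, (N <= k)%nat -> Rabs (pic k t - pic N t) <= 2 * W t / 2 ^ N).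
{ intros k Hk. apply pic_cauchy'; auto. }
pose proof (Hb n Hn). pose proof (Hb m Hm).
replace (pic n t - pic m t) with ((pic n t - pic N t) - (pic m t - pic N t)) by ring.
eapply Rle_lt_trans. apply Rabs_sub_le.
assert (2 ^ N <> 0) by (apply pow_nonzero; lra).
replace (4 * W t / 2 ^ N) with (2 * W t / 2 ^ N + 2 * W t / 2 ^ N) in HN by (field; auto).
lra.
Qed.


Definition yl0 t := real (Lim_seq (fun n => pic n t)).

Lemma yl0_bound n t : 0 <= t -> Rabs (yl0 t - pic n t) <= 2 * W t / 2 ^ n.
Proof.
intros Ht. pose proof (Lim_seq_correct' _ (pic_ex_lim t Ht)) as H.
apply (is_lim_seq_incr_n _ n) in H.
pose proof (is_lim_seq_minus' _ _ _ _ H (is_lim_seq_const (pic n t))) as H1.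
apply is_lim_seq_abs in H1.
pose proof (is_lim_seq_le _ _ _ _ (fun m => pic_cauchy' n (m + n) t Ht ltac:(lia)) H1 (is_lim_seq_const _)) as H2.
simpl in H2. exact H2.
Qed.

Lemma B_nonneg : 0 <= B.
Proof. pose proof (Rabs_pos (F 0 0)). pose proof (HB 0 0). lra. Qed.

Lemma yl0_lip u u' : 0 <= u -> 0 <= u' -> Rabs (yl0 u - yl0 u') <= B * Rabs (u - u').
Proof.
intros Hu Hu'. apply (le_geom _ _ (2 * W u + 2 * W u')). intros n.
pose proof (yl0_bound n u Hu). pose proof (yl0_bound n u' Hu'). pose proof (pic_lip n u u').
replace (yl0 u - yl0 u') with ((yl0 u - pic n u) + (pic n u - pic n u') - (yl0 u' - pic n u')) by ring.
eapply Rle_trans. apply Rabs_sub_le. eapply Rle_trans. apply Rplus_le_compat_r. apply Rabs_triang.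
assert (2 ^ n <> 0) by (apply pow_nonzero; lra).
replace ((2 * W u + 2 * W u') / 2 ^ n) with (2 * W u / 2 ^ n + 2 * W u' / 2 ^ n) by (field; auto).
lra.
Qed.

Definition ylim t := yl0 (Rmax 0 t).

Lemma Rmax_lip t t' : Rabs (Rmax 0 t - Rmax 0 t') <= Rabs (t - t').
Proof. unfold Rmax; destruct (Rle_dec 0 t); destruct (Rle_dec 0 t'); unfold Rabs;
 repeat match goal with |- context [Rcase_abs ?x] => destruct (Rcase_abs x) end; lra. Qed.

Lemma ylim_lip t t' : Rabs (ylim t - ylim t') <= B * Rabs (t - t').
Proof.
unfold ylim. eapply Rle_trans. apply yl0_lip; apply Rmax_l.
apply Rmult_le_compat_l. apply B_nonneg. apply Rmax_lip.
Qed.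

Lemma ylim_cont t : continuous ylim t.
Proof. apply (lip_cont _ B). apply ylim_lip. Qed.

Lemma G_cont x : continuous (fun s => F s (ylim s)) x.
Proof. apply Fcomp_cont, ylim_cont. Qed.

Lemma ylim_fix t : 0 <= t -> ylim t = y0 + RInt (fun s => F s (ylim s)) 0 t.
Proof.
intros Ht. apply Rminus_diag_uniq.
apply (zero_geom _ (2 * W t + t * (L * (2 * W t)))). intros n.
assert (Hp : 0 < 2 ^ n) by (apply pow_lt; lra).
assert (Hy : ylim t = yl0 t) by (unfold ylim; rewrite Rmax_right; auto).
pose proof (yl0_bound (S n) t Ht) as H1. change (pic (S n) t) with (y0 + RInt (fun s => F s (pic n s)) 0 t) in H1.
assert (H2 : Rabs (RInt (fun s => minus (F s (pic n s)) (F s (ylim s))) 0 t) <= (t - 0) * (L * (2 * W t / 2 ^ n))).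
{ apply abs_RInt_le_const. auto.
  apply (ex_RInt_minus (V:=R_NormedModule)). apply ex_Fpic. apply exR, G_cont.
  intros s Hs. unfold minus, plus, opp; simpl. change (F s (pic n s) + - F s (ylim s)) with (F s (pic n s) - F s (ylim s)).
  eapply Rle_trans. apply HLip. apply Rmult_le_compat_l. lra.
  assert (ylim s = yl0 s) by (unfold ylim; rewrite Rmax_right; lra). rewrite H.
  rewrite Rabs_minus_sym. eapply Rle_trans. apply yl0_bound; lra.
  unfold Rdiv. apply Rmult_le_compat_r. left; apply Rinv_0_lt_compat; lra.
  apply Rmult_le_compat_l. lra. apply W_mono; lra. }
change (Rabs (RInt (fun s => F s (pic n s) - F s (ylim s)) 0 t) <= (t - 0) * (L * (2 * W t / 2 ^ n))) in H2.
rewrite (RInt_minusR _ _ _ _ (ex_Fpic n 0 t) (exR _ 0 t G_cont)) in H2.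
rewrite Hy. set (I1 := RInt (fun s => F s (pic n s)) 0 t) in *. set (I2 := RInt (fun s => F s (ylim s)) 0 t) in *. change (RInt (fun s => F s (ylim s)) 0 t) with I2 in H2.
replace (yl0 t - (y0 + I2)) with ((yl0 t - (y0 + I1)) + (I1 - I2)) by ring.
eapply Rle_trans. apply Rabs_triang.
change (2 ^ S n) with (2 * 2 ^ n) in H1.
pose proof (W_pos t).
assert (2 * W t / (2 * 2 ^ n) <= 2 * W t / 2 ^ n).
{ unfold Rdiv. apply Rmult_le_compat_l. lra. apply Rinv_le_contravar. lra. lra. }
replace ((2 * W t + t * (L * (2 * W t))) / 2 ^ n) with (2 * W t / 2 ^ n + (t - 0) * (L * (2 * W t / 2 ^ n))) by (field; lra).
apply Rplus_le_compat. lra. exact H2.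
Qed.

Lemma ylim_0 : ylim 0 = y0.
Proof. rewrite ylim_fix by lra. rewrite RInt_point. unfold zero; simpl; ring. Qed.

Lemma ylim_deriv t : 0 < t -> is_derive ylim t (F t (ylim t)).
Proof.
intros Ht.
apply (is_derive_ext_loc (fun u => y0 + RInt (fun s => F s (ylim s)) 0 u)).
- exists (mkposreal t Ht). intros y Hy. change (Rabs (y - t) < t) in Hy.
  rewrite ylim_fix. auto. unfold Rabs in Hy; destruct Rcase_abs in Hy; lra.
- pose proof (is_derive_plus (fun _ => y0) (fun u => RInt (fun s => F s (ylim s)) 0 u) t 0 (F t (ylim t))
   (is_derive_const y0 t) (RInt_deriv _ t G_cont)) as H.
  replace (F t (ylim t)) with (plus 0 (F t (ylim t))) by (unfold plus; simpl; ring). exact H.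
Qed.

End Picard.

Theorem picard (F : R -> R -> R) (y0 L B : R) : 0 < L ->
  (forall t y, Rabs (F t y) <= B) ->
  (forall t y1 y2, Rabs (F t y1 - F t y2) <= L * Rabs (y1 - y2)) ->
  (forall y t, continuous (fun t => F t y) t) ->
  exists y : R -> R, y 0 = y0 /\ (forall t, continuous y t) /\
    (forall t, 0 < t -> is_derive y t (F t (y t))).
Proof.
intros HL HB HLip HC. exists (ylim F y0).
split. apply (ylim_0 F y0 L B); auto. split. intros; apply (ylim_cont F y0 L B); auto.
intros; apply (ylim_deriv F y0 L B); auto.
Qed.




Lemma mvt_open (f df : R -> R) a b : a < b ->
  (forall x, a < x < b -> is_derive f x (df x)) ->
  (forall x, a <= x <= b -> continuous f x) ->
  exists c, a < c < b /\ f b - f a = df c * (b - a).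
Proof.
intros Hab Hd Hc.
assert (pr1 : forall c, a < c < b -> derivable_pt f c).
{ intros c Hc'. exists (df c). apply is_derive_Reals, Hd, Hc'. }
assert (pr2 : forall c, a < c < b -> derivable_pt id c).
{ intros c _. apply derivable_pt_id. }
destruct (MVT f id a b pr1 pr2 Hab) as [c [Pc H]].
- intros; apply continuity_pt_filterlim, Hc; auto.
- intros; apply derivable_continuous_pt, derivable_pt_id.
- exists c. split; auto.
  rewrite (derive_pt_eq_0 _ _ _ _ (proj1 (is_derive_Reals _ _ _) (Hd c Pc))) in H.
  rewrite (derive_pt_eq_0 _ _ _ (pr2 c Pc) (derivable_pt_lim_id c)) in H.
  unfold id in H. lra.
Qed.

Lemma exd_cont (f : R -> R) x : ex_derive f x -> continuous f x.
Proof. intros H. exact (ex_derive_continuous f x H). Qed.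

Lemma clamp_lip lo hi t t' : Rabs (Rmax lo (Rmin hi t) - Rmax lo (Rmin hi t')) <= Rabs (t - t').
Proof.
unfold Rmax, Rmin. destruct (Rle_dec hi t); destruct (Rle_dec hi t');
repeat match goal with |- context [Rle_dec ?a ?b] => destruct (Rle_dec a b) end; unfold Rabs;
 repeat match goal with |- context [Rcase_abs ?x] => destruct (Rcase_abs x) end; lra.
Qed.

Lemma clamp_range lo hi t : lo <= hi -> lo <= Rmax lo (Rmin hi t) <= hi.
Proof.
intros h. split. apply Rmax_l. apply Rmax_lub. auto. apply Rmin_l.
Qed.

Lemma clamp_in lo hi t : lo <= t <= hi -> Rmax lo (Rmin hi t) = t.
Proof. intros h. rewrite Rmin_right by lra. rewrite Rmax_right by lra. auto. Qed.

Lemma cont_at_right (f : R -> R) x l : continuity_pt f x -> f x = l -> filterlim f (at_right x) (locally l).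
Proof.
intros H e. apply continuity_pt_filterlim in H. rewrite <- e.
intros Q HQ. destruct (H Q HQ) as [d Hd]. exists d. intros y Hy _. apply Hd, Hy.
Qed.

Lemma cont_at_left (f : R -> R) x l : continuity_pt f x -> f x = l -> filterlim f (at_left x) (locally l).
Proof.
intros H e. apply continuity_pt_filterlim in H. rewrite <- e.
intros Q HQ. destruct (H Q HQ) as [d Hd]. exists d. intros y Hy _. apply Hd, Hy.
Qed.

Section Main.
Variables (s x0 g0 : R) (P : R -> R).
Hypothesis Hs : 0 < s.
Hypothesis Hx0 : 0 < x0.
Hypothesis HP : C2_on_nonneg P.
Hypothesis Hinc : strictly_increasing_nonneg P.
Hypothesis HPpos : forall x, 0 < x -> 0 < P x.
Hypothesis Hg0 : 0 < g0.
Hypothesis Hgc : g0 + g0 ^ 2 < P x0.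

Lemma Pmono x y : 0 <= x -> x <= y -> P x <= P y.
Proof. intros h1 h2. destruct (Req_dec x y). subst; lra. left; apply Hinc; lra. Qed.

Lemma P_der x : 0 <= x -> is_derive P x (Derive P x).
Proof. intros h. apply Derive_correct. apply (HP x h). Qed.

Lemma P_cont x : 0 <= x -> continuous P x.
Proof. intros h. apply exd_cont. apply (HP x h). Qed.

Lemma DP_cont x : 0 <= x -> continuous (Derive P) x.
Proof. intros h. apply exd_cont. apply (HP x h). Qed.

Definition c0 := P x0 - g0 - g0 ^ 2.
Lemma Hc0 : 0 < c0.
Proof. unfold c0. lra. Qed.
Definition a := s * g0 / c0.
Lemma Ha : 0 < a.
Proof. unfold a. pose proof Hc0. apply Rdiv_lt_0_compat; nra. Qed.
Definition M := x0 * exp (a * g0) + 1.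
Lemma HM : x0 < M.
Proof.
unfold M. assert (1 <= exp (a * g0)).
{ rewrite <- exp_0. destruct (Req_dec (a*g0) 0). rewrite H; lra. left; apply exp_increasing.
  pose proof Ha; nra. }
nra.
Qed.

Lemma Lp_ex : exists Lp, 0 <= Lp /\ forall u v, x0 <= u <= M -> x0 <= v <= M ->
  Rabs (P u - P v) <= Lp * Rabs (u - v).
Proof.
pose proof HM.
destruct (continuity_ab_maj (fun x => Rabs (Derive P x)) x0 M) as [Mx [HMx1 HMx2]]. lra.
{ intros c Hc. apply continuity_pt_filterlim.
  apply (continuous_comp (Derive P) Rabs). apply DP_cont; lra. apply continuous_Rabs. }
exists (Rabs (Derive P Mx)). split. apply Rabs_pos.
assert (K : forall u v, x0 <= u <= M -> x0 <= v <= M -> u < v -> Rabs (P u - P v) <= Rabs (Derive P Mx) * Rabs (u - v)).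
{ intros u v Hu Hv Huv. destruct (mvt_open P (Derive P) u v Huv) as [c [Hc1 Hc2]].
  - intros; apply P_der; lra.
  - intros; apply P_cont; lra.
  - rewrite Rabs_minus_sym, Hc2, (Rabs_minus_sym u v), Rabs_mult.
    apply Rmult_le_compat_r. apply Rabs_pos. apply HMx1. lra. }
intros u v Hu Hv. destruct (Rtotal_order u v) as [h|[h|h]].
- apply K; auto.
- subst. replace (P v - P v) with 0 by ring. replace (v - v) with 0 by ring. rewrite Rabs_R0; lra.
- rewrite Rabs_minus_sym, (Rabs_minus_sym u v). apply K; auto.
Qed.

Section WithLp.
Variable Lp : R.
Hypothesis HLp0 : 0 <= Lp.
Hypothesis HLp : forall u v, x0 <= u <= M -> x0 <= v <= M -> Rabs (P u - P v) <= Lp * Rabs (u - v).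

Definition q t := Rmax 0 (Rmin g0 (g0 - t)).
Definition cx y := Rmax x0 (Rmin M y).
Definition Fd t y := s * cx y * q t / (P (cx y) - q t - q t ^ 2).

Lemma q_range t : 0 <= q t <= g0.
Proof. apply clamp_range; lra. Qed.
Lemma cx_range y : x0 <= cx y <= M.
Proof. apply clamp_range; pose proof HM; lra. Qed.

Lemma den_ge t y : c0 <= P (cx y) - q t - q t ^ 2 <= P M.
Proof.
pose proof (q_range t). pose proof (cx_range y).
pose proof (Pmono x0 (cx y) ltac:(lra) ltac:(lra)).
pose proof (Pmono (cx y) M ltac:(lra) ltac:(lra)).
unfold c0. split; nra.
Qed.

Lemma F_nonneg t y : 0 <= Fd t y.
Proof.
pose proof (q_range t). pose proof (cx_range y). pose proof (den_ge t y). pose proof Hc0.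
unfold Fd. apply Rmult_le_pos. apply Rmult_le_pos. nra. lra. left; apply Rinv_0_lt_compat; lra.
Qed.

Lemma F_le t y : Fd t y <= a * cx y.
Proof.
pose proof (q_range t). pose proof (cx_range y). pose proof (den_ge t y). pose proof Hc0.
unfold Fd, a. set (d := P (cx y) - q t - q t ^ 2) in *.
apply Rmult_le_reg_r with d. lra.
unfold Rdiv. rewrite Rmult_assoc, Rinv_l by lra.
replace (s * g0 * / c0 * cx y * d) with ((s * cx y * g0) * (d / c0)) by (field; lra).
rewrite Rmult_1_r.
assert (1 <= d / c0). { apply Rmult_le_reg_r with c0. lra. unfold Rdiv. rewrite Rmult_assoc, Rinv_l by lra. lra. }
assert (0 <= s * cx y) by (apply Rmult_le_pos; lra).
assert (0 <= s * cx y * g0) by (apply Rmult_le_pos; lra).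
assert (s * cx y * q t <= s * cx y * g0) by (apply Rmult_le_compat_l; lra).
assert (s * cx y * g0 * 1 <= s * cx y * g0 * (d / c0)) by (apply Rmult_le_compat_l; lra). lra.
Qed.

Definition Bd := a * M.
Lemma F_bound t y : Rabs (Fd t y) <= Bd.
Proof.
rewrite Rabs_right by (apply Rle_ge, F_nonneg). eapply Rle_trans. apply F_le.
unfold Bd. pose proof Ha. pose proof (cx_range y). nra.
Qed.

Definition Lf := s * g0 * (M * Lp + P M) / c0 ^ 2 + 1.

Lemma F_lip t y1 y2 : Rabs (Fd t y1 - Fd t y2) <= Lf * Rabs (y1 - y2).
Proof.
pose proof (q_range t). pose proof (cx_range y1). pose proof (cx_range y2).
pose proof (den_ge t y1). pose proof (den_ge t y2). pose proof Hc0. pose proof HM.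
pose proof (clamp_lip x0 M y1 y2) as Hcl. fold (cx y1) (cx y2) in Hcl.
pose proof (HLp (cx y1) (cx y2) H0 H1) as HPl.
unfold Fd. set (u := cx y1) in *. set (v := cx y2) in *. set (r := q t) in *.
set (du := P u - r - r ^ 2) in *. set (dv := P v - r - r ^ 2) in *.
assert (E : u * dv - v * du = u * (P v - P u) + (u - v) * du) by (unfold du, dv; ring).
replace (s * u * r / du - s * v * r / dv) with ((s * r) * (u * (P v - P u) + (u - v) * du) / (du * dv))
  by (rewrite <- E; field; lra).
assert (HPM : 0 < P M) by (apply HPpos; lra).
assert (Hn : Rabs (u * (P v - P u) + (u - v) * du) <= (M * Lp + P M) * Rabs (u - v)).
{ eapply Rle_trans. apply Rabs_triang. rewrite !Rabs_mult.
  rewrite (Rabs_right u) by lra. rewrite (Rabs_right du) by lra.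
  rewrite Rabs_minus_sym in HPl.
  assert (u * Rabs (P v - P u) <= M * (Lp * Rabs (u - v))).
  { apply Rmult_le_compat; try lra. apply Rabs_pos. }
  assert (Rabs (u - v) * du <= Rabs (u - v) * P M).
  { apply Rmult_le_compat_l. apply Rabs_pos. lra. }
  nra. }
unfold Rdiv. rewrite Rabs_mult, Rabs_mult, Rabs_inv.
rewrite (Rabs_right (s * r)) by nra. rewrite (Rabs_right (du * dv)) by nra.
assert (c0 ^ 2 <= du * dv) by nra.
assert (0 < c0 ^ 2) by nra.
assert (/ (du * dv) <= / c0 ^ 2) by (apply Rinv_le_contravar; lra).
assert (0 <= Rabs (u - v)) by apply Rabs_pos.
assert (0 <= M * Lp + P M) by nra.
apply Rle_trans with (s * g0 * ((M * Lp + P M) * Rabs (u - v)) * / c0 ^ 2).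
- apply Rmult_le_compat. apply Rmult_le_pos. nra. apply Rabs_pos.
  left; apply Rinv_0_lt_compat; nra.
  apply Rmult_le_compat. nra. apply Rabs_pos. nra. auto. auto.
- unfold Lf. pose proof (Rabs_pos (y1 - y2)).
  apply Rle_trans with ((s * g0 * (M * Lp + P M) / c0 ^ 2) * Rabs (y1 - y2)).
  + unfold Rdiv. replace (s * g0 * ((M * Lp + P M) * Rabs (u - v)) * / c0 ^ 2)
      with ((s * g0 * (M * Lp + P M) * / c0 ^ 2) * Rabs (u - v)) by ring.
    apply Rmult_le_compat_l. apply Rmult_le_pos. apply Rmult_le_pos; [apply Rmult_le_pos|]; lra. left; apply Rinv_0_lt_compat; nra. auto.
  + nra.
Qed.

Lemma Lf_pos : 0 < Lf.
Proof.
unfold Lf. pose proof HM. pose proof Hc0. assert (0 < P M) by (apply HPpos; lra).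
assert (0 <= s * g0 * (M * Lp + P M) / c0 ^ 2).
{ apply Rmult_le_pos. apply Rmult_le_pos. nra. nra. left; apply Rinv_0_lt_compat; nra. }
lra.
Qed.

Lemma F_cont y t : continuous (fun t => Fd t y) t.
Proof.
unfold Fd. set (u := cx y).
apply (continuous_comp q (fun r => s * u * r / (P u - r - r ^ 2))).
- apply (lip_cont q 1). intros a0 b. rewrite Rmult_1_l. unfold q.
  eapply Rle_trans. apply clamp_lip. right. replace (g0 - a0 - (g0 - b)) with (- (a0 - b)) by ring.
  apply Rabs_Ropp.
- apply exd_cont. pose proof (den_ge t y). pose proof Hc0. auto_derive.
  fold u in H. lra.
Qed.


Section WithX.
Variable X : R -> R.
Hypothesis HX0 : X 0 = x0.
Hypothesis HXc : forall t, continuous X t.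
Hypothesis HXd : forall t, 0 < t -> is_derive X t (Fd t (X t)).

Lemma X_mono t t' : 0 <= t -> t <= t' -> X t <= X t'.
Proof.
intros h1 h2. destruct (Req_dec t t'). subst; lra.
destruct (mvt_open X (fun u => Fd u (X u)) t t') as [c [Hc1 Hc2]]. lra.
- intros; apply HXd; lra.
- intros; apply HXc.
- pose proof (F_nonneg c (X c)). nra.
Qed.

Lemma X_ge t : 0 <= t -> x0 <= X t.
Proof. intros h. rewrite <- HX0. apply X_mono; lra. Qed.

Lemma cx_le y : x0 <= y -> cx y <= y.
Proof. intros h. unfold cx. apply Rmax_lub. auto. apply Rmin_r. Qed.

Lemma der_mul (f g : R -> R) x df dg : is_derive f x df -> is_derive g x dg ->
  is_derive (fun y => f y * g y) x (df * g x + f x * dg).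
Proof. intros H1 H2. exact (is_derive_mult f g x df dg H1 H2 Rmult_comm). Qed.

Lemma cont_mul (f g : R -> R) x : continuous f x -> continuous g x -> continuous (fun y => f y * g y) x.
Proof. intros H1 H2. exact (continuous_mult f g x H1 H2). Qed.

Lemma X_le t : 0 <= t -> X t <= x0 * exp (a * t).
Proof.
intros h. destruct (Req_dec t 0). subst. rewrite HX0, Rmult_0_r, exp_0. lra.
set (h0 := fun u => X u * exp (- (a * u))).
assert (Hd : forall c, 0 < c -> is_derive h0 c (Fd c (X c) * exp (- (a * c)) + X c * (- a * exp (- (a * c))))).
{ intros c Hc. apply (der_mul X (fun u => exp (- (a * u)))). apply HXd; auto. auto_derive. auto. ring. }
destruct (mvt_open h0 (fun c => Fd c (X c) * exp (- (a * c)) + X c * (- a * exp (- (a * c)))) 0 t) as [c [Hc1 Hc2]]. lra.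
- intros; apply Hd; lra.
- intros. apply (cont_mul X (fun u => exp (- (a * u)))). apply HXc. apply exd_cont. auto_derive. auto.
- unfold h0 in Hc2. rewrite HX0, Rmult_0_r, Ropp_0, exp_0 in Hc2.
  pose proof (F_le c (X c)). pose proof (cx_le (X c) (X_ge c ltac:(lra))). pose proof Ha.
  pose proof (exp_pos (- (a * c))).
  assert (Fd c (X c) * exp (- (a * c)) + X c * (- a * exp (- (a * c))) <= 0).
  { replace (Fd c (X c) * exp (- (a * c)) + X c * (- a * exp (- (a * c)))) with
      ((Fd c (X c) - a * X c) * exp (- (a * c))) by ring.
    assert (Fd c (X c) - a * X c <= 0) by nra. nra. }
  assert (X t * exp (- (a * t)) <= x0) by nra.
  replace (X t) with (X t * exp (- (a * t)) * exp (a * t)).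
  apply Rmult_le_compat_r. left; apply exp_pos. auto.
  rewrite Rmult_assoc, <- exp_plus. replace (- (a * t) + a * t) with 0 by ring. rewrite exp_0; ring.
Qed.

Lemma X_lt_M t : 0 <= t <= g0 -> X t < M.
Proof.
intros h. eapply Rle_lt_trans. apply X_le; lra. unfold M.
assert (exp (a * t) <= exp (a * g0)).
{ destruct (Req_dec t g0). subst; lra. left; apply exp_increasing. pose proof Ha. nra. }
nra.
Qed.

Lemma cx_X t : 0 <= t <= g0 -> cx (X t) = X t.
Proof. intros h. apply clamp_in. pose proof (X_ge t (proj1 h)). pose proof (X_lt_M t h). lra. Qed.

Lemma q_in t : 0 <= t <= g0 -> q t = g0 - t.
Proof. intros h. apply clamp_in. lra. Qed.

Definition dX t := s * X t * (g0 - t) / (P (X t) - (g0 - t) - (g0 - t) ^ 2).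

Lemma dX_eq t : 0 <= t <= g0 -> Fd t (X t) = dX t.
Proof. intros h. unfold Fd, dX. rewrite cx_X, q_in by auto. auto. Qed.

Lemma den_pos t : 0 <= t <= g0 -> c0 <= P (X t) - (g0 - t) - (g0 - t) ^ 2.
Proof. intros h. pose proof (den_ge t (X t)). rewrite cx_X, q_in in H by auto. lra. Qed.

Lemma dX_pos t : 0 <= t < g0 -> 0 < dX t.
Proof.
intros h. pose proof (den_pos t ltac:(lra)). pose proof Hc0. pose proof (X_ge t (proj1 h)).
unfold dX. apply Rdiv_lt_0_compat. apply Rmult_lt_0_compat. nra. lra. lra.
Qed.

Lemma X_strict t t' : 0 <= t -> t < t' -> t' <= g0 -> X t < X t'.
Proof.
intros h1 h2 h3.
destruct (mvt_open X (fun u => Fd u (X u)) t t') as [c [Hc1 Hc2]]. lra.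
- intros; apply HXd; lra.
- intros; apply HXc.
- rewrite dX_eq in Hc2 by lra. pose proof (dX_pos c ltac:(lra)). nra.
Qed.

Definition x1 := X g0.

Lemma x1_gt : x0 < x1.
Proof. unfold x1. rewrite <- HX0. apply X_strict; lra. Qed.

Definition cl t := Rmax 0 (Rmin g0 t).
Definition E t := X (cl t) + (t - cl t).

Lemma cl_mono t t' : t <= t' -> cl t <= cl t'.
Proof.
intros h. unfold cl, Rmax, Rmin. destruct (Rle_dec g0 t); destruct (Rle_dec g0 t');
repeat match goal with |- context [Rle_dec ?a ?b] => destruct (Rle_dec a b) end; lra.
Qed.

Lemma cl_lip t t' : t <= t' -> cl t' - cl t <= t' - t.
Proof.
intros h. unfold cl, Rmax, Rmin. destruct (Rle_dec g0 t); destruct (Rle_dec g0 t');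
repeat match goal with |- context [Rle_dec ?a ?b] => destruct (Rle_dec a b) end; lra.
Qed.

Lemma cl_range t : 0 <= cl t <= g0.
Proof. apply clamp_range; lra. Qed.

Lemma E_cont t : continuous E t.
Proof.
assert (Hcl : forall t, continuous cl t).
{ intros u. apply (lip_cont cl 1). intros. rewrite Rmult_1_l. apply clamp_lip. }
unfold E. apply (continuous_plus (fun t => X (cl t)) (fun t => t - cl t)).
apply (continuous_comp cl X). apply Hcl. apply HXc.
apply (continuous_minus (fun t => t) cl). apply continuous_id. apply Hcl.
Qed.

Lemma E_eq t : 0 <= t <= g0 -> E t = X t.
Proof. intros h. unfold E, cl. rewrite clamp_in by auto. ring. Qed.

Lemma E_strict t t' : t < t' -> E t < E t'.
Proof.
intros h. unfold E. pose proof (cl_mono t t' (Rlt_le _ _ h)). pose proof (cl_lip t t' (Rlt_le _ _ h)).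
pose proof (cl_range t). pose proof (cl_range t').
destruct (Req_dec (cl t) (cl t')) as [e|ne].
- rewrite e. lra.
- pose proof (X_strict (cl t) (cl t') ltac:(lra) ltac:(lra) ltac:(lra)). lra.
Qed.

Lemma E_le t t' : t <= t' -> E t <= E t'.
Proof. intros h. destruct (Req_dec t t'). subst; lra. left; apply E_strict; lra. Qed.

Lemma E_neg t : t <= 0 -> E t = x0 + t.
Proof. intros h. unfold E, cl. rewrite Rmin_right by lra. rewrite Rmax_left by lra. rewrite HX0. ring. Qed.

Lemma E_big t : g0 <= t -> E t = x1 + t - g0.
Proof. intros h. unfold E, cl, x1. rewrite Rmin_left by lra. rewrite Rmax_right by lra. ring. Qed.

Lemma Tinv_ex y : {t | E t = y}.
Proof.
set (lo := Rmin 0 (y - x0)). set (hi := Rmax g0 (y - x1 + g0)).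
assert (Hlo : E lo <= y).
{ unfold lo. rewrite E_neg by apply Rmin_l. pose proof (Rmin_r 0 (y - x0)). lra. }
assert (Hhi : y <= E hi).
{ unfold hi. rewrite E_big by apply Rmax_l. pose proof (Rmax_r g0 (y - x1 + g0)). lra. }
destruct (IVT_gen E lo hi y) as [t [_ Ht]].
- intros u. apply continuity_pt_filterlim, E_cont.
- split. eapply Rle_trans. apply Rmin_l. auto. eapply Rle_trans. apply Hhi. apply Rmax_r.
- exists t; auto.
Qed.

Definition Tinv y := proj1_sig (Tinv_ex y).

Lemma E_Tinv y : E (Tinv y) = y.
Proof. unfold Tinv. destruct (Tinv_ex y); simpl; auto. Qed.

Lemma Tinv_E t : Tinv (E t) = t.
Proof.
pose proof (E_Tinv (E t)). set (u := Tinv (E t)) in *.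
destruct (Rtotal_order u t) as [h|[h|h]]; auto.
pose proof (E_strict _ _ h); lra. pose proof (E_strict _ _ h); lra.
Qed.

Lemma Tinv_strict y y' : y < y' -> Tinv y < Tinv y'.
Proof.
intros h. destruct (Rlt_le_dec (Tinv y) (Tinv y')) as [|h']; auto.
pose proof (E_le _ _ h'). rewrite !E_Tinv in H. lra.
Qed.

Lemma Tinv_le y y' : y <= y' -> Tinv y <= Tinv y'.
Proof. intros h. destruct (Req_dec y y'). subst; lra. left; apply Tinv_strict; lra. Qed.

Lemma Tinv_cont y : continuity_pt Tinv y.
Proof.
set (t := Tinv y).
apply (continuity_pt_recip_interv E Tinv (t - 1) (t + 1)). lra.
- intros; apply E_strict; lra.
- intros; apply E_Tinv.
- intros z h1 h2. pose proof (Tinv_le _ _ h1). pose proof (Tinv_le _ _ h2). rewrite !Tinv_E in *. lra.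
- intros; apply continuity_pt_filterlim, E_cont.
- pose proof (E_strict (t - 1) t ltac:(lra)). pose proof (E_strict t (t + 1) ltac:(lra)).
  unfold t in *. rewrite E_Tinv in *. lra.
Qed.

Lemma Tinv_x0 : Tinv x0 = 0.
Proof. rewrite <- HX0, <- (E_eq 0) by lra. apply Tinv_E. Qed.

Lemma Tinv_x1 : Tinv x1 = g0.
Proof. unfold x1. rewrite <- (E_eq g0) by lra. apply Tinv_E. Qed.

Lemma Tinv_in x : x0 < x < x1 -> 0 < Tinv x < g0.
Proof.
intros h. pose proof (Tinv_strict _ _ (proj1 h)). pose proof (Tinv_strict _ _ (proj2 h)).
rewrite Tinv_x0, Tinv_x1 in *. lra.
Qed.


Lemma E_der t : 0 < t < g0 -> is_derive E t (dX t).
Proof.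
intros h. apply (is_derive_ext_loc X).
- assert (0 < Rmin t (g0 - t)) by (apply Rmin_pos; lra).
  exists (mkposreal _ H). intros u Hu. change (Rabs (u - t) < Rmin t (g0 - t)) in Hu.
  pose proof (Rmin_l t (g0 - t)). pose proof (Rmin_r t (g0 - t)).
  rewrite E_eq. auto. unfold Rabs in Hu; destruct Rcase_abs in Hu; lra.
- rewrite <- dX_eq by lra. apply HXd; lra.
Qed.

Lemma Tinv_der x : x0 < x < x1 -> derivable_pt_lim Tinv x (1 / dX (Tinv x)).
Proof.
intros Hx. pose proof (Tinv_in x Hx) as Ht. set (t := Tinv x) in *.
set (d := Rmin t (g0 - t) / 2).
assert (Hd : 0 < d). { unfold d. pose proof (Rmin_pos t (g0 - t) ltac:(lra) ltac:(lra)). lra. }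
assert (Hd1 : d < t). { unfold d. pose proof (Rmin_l t (g0 - t)). lra. }
assert (Hd2 : t + d < g0). { unfold d. pose proof (Rmin_r t (g0 - t)). lra. }
set (lb := E (t - d)). set (ub := E (t + d)).
assert (Prf : forall a0, Tinv lb <= a0 <= Tinv ub -> derivable_pt E a0).
{ intros a0 Ha0. unfold lb, ub in Ha0. rewrite !Tinv_E in Ha0.
  exists (dX a0). apply is_derive_Reals, E_der. lra. }
assert (Hlbub : lb < ub) by (apply E_strict; lra).
assert (Hxin : lb < x < ub).
{ unfold lb, ub. rewrite <- (E_Tinv x). fold t. split; apply E_strict; lra. }
assert (Hincr : Tinv lb <= Tinv x <= Tinv ub).
{ unfold lb, ub. rewrite !Tinv_E. fold t. lra. }
assert (Hcomp : forall y, lb <= y <= ub -> comp E Tinv y = id y).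
{ intros y _. unfold comp, id. apply E_Tinv. }
assert (Hval : derive_pt E (Tinv x) (Prf (Tinv x) Hincr) = dX t).
{ apply derive_pt_eq_0. apply is_derive_Reals, E_der. fold t. lra. }
assert (Hne : derive_pt E (Tinv x) (Prf (Tinv x) Hincr) <> 0).
{ rewrite Hval. pose proof (dX_pos t ltac:(lra)). lra. }
pose proof (derivable_pt_lim_recip_interv E Tinv lb ub x Prf (Tinv_cont x) Hlbub Hxin Hincr Hcomp Hne) as H.
rewrite Hval in H. exact H.
Qed.

Definition g1 x := g0 - Tinv x.

Lemma g1_der x : x0 < x < x1 -> is_derive g1 x (ode_rhs P s x (g1 x)).
Proof.
intros Hx. pose proof (Tinv_in x Hx) as Ht.
pose proof (proj2 (is_derive_Reals _ _ _) (Tinv_der x Hx)) as H.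
pose proof (is_derive_minus (fun _ => g0) Tinv x 0 _ (is_derive_const g0 x) H) as H1.
replace (ode_rhs P s x (g1 x)) with (minus 0 (1 / dX (Tinv x))). exact H1.
unfold g1, ode_rhs, dX. set (t := Tinv x) in *.
assert (Hxe : x = X t). { rewrite <- (E_Tinv x). fold t. apply E_eq; lra. }
rewrite Hxe. pose proof (den_pos t ltac:(lra)). pose proof Hc0. pose proof (X_ge t ltac:(lra)).
unfold minus, plus, opp; simpl. field. repeat split; lra.
Qed.

Lemma g1_cont x : continuity_pt g1 x.
Proof.
apply continuity_pt_filterlim. unfold g1.
apply (continuous_minus (fun _ => g0) Tinv). apply continuous_const.
apply continuity_pt_filterlim, Tinv_cont.
Qed.

Lemma g1_x0 : g1 x0 = g0.
Proof. unfold g1. rewrite Tinv_x0. ring. Qed.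

Lemma g1_x1 : g1 x1 = 0.
Proof. unfold g1. rewrite Tinv_x1. ring. Qed.

Lemma g1_pos x : x0 < x < x1 -> 0 < g1 x.
Proof. intros h. pose proof (Tinv_in x h). unfold g1. lra. Qed.


Lemma right_lim_eps (f : R -> R) x l : filterlim f (at_right x) (locally l) ->
  forall eps, 0 < eps -> exists d, 0 < d /\ forall y, x < y < x + d -> Rabs (f y - l) < eps.
Proof.
intros H eps He. destruct (proj1 (filterlim_locally f l) H (mkposreal eps He)) as [d Hd].
exists d. split. apply cond_pos. intros y Hy. apply (Hd y). change (Rabs (y - x) < d).
rewrite Rabs_right; lra. lra.
Qed.

Section Uniq.
Variable g2 : R -> R.
Variable b : R.
Hypothesis Hb : x1 < b.
Hypothesis Hg2lim : filterlim g2 (at_right x0) (locally g0).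
Hypothesis Hg2 : forall x, x0 < x < b -> 0 < g2 x /\ is_derive g2 x (ode_rhs P s x (g2 x)).

Definition kf x := (1 + P x / (g1 x * g2 x)) / (s * x).
Definition wf x := (g1 x - g2 x) ^ 2.

Lemma g2_cont x : x0 < x < b -> continuous g2 x.
Proof. intros h. apply exd_cont. eexists. apply (Hg2 x h). Qed.

Lemma g1_contc x : continuous g1 x.
Proof. apply continuity_pt_filterlim, g1_cont. Qed.

Lemma kf_cont x : x0 < x < x1 -> continuous kf x.
Proof.
intros h. pose proof (g1_pos x h). pose proof (proj1 (Hg2 x ltac:(lra))).
assert (Hp : continuous P x) by (apply P_cont; lra).
unfold kf. unfold Rdiv.
apply (cont_mul (fun x => 1 + P x * / (g1 x * g2 x)) (fun x => / (s * x))).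
- apply (continuous_plus (fun _ => 1) (fun x => P x * / (g1 x * g2 x))). apply continuous_const.
  apply (cont_mul P (fun x => / (g1 x * g2 x))). auto.
  apply (continuous_Rinv_comp (fun x => g1 x * g2 x)).
  apply (cont_mul g1 g2). apply g1_contc. apply g2_cont; lra. nra.
- apply (continuous_Rinv_comp (fun x => s * x)).
  apply (cont_mul (fun _ => s) (fun x => x)). apply continuous_const. apply continuous_id. nra.
Qed.

Lemma wf_der x : x0 < x < x1 -> is_derive wf x (2 * kf x * wf x).
Proof.
intros h. pose proof (g1_pos x h) as h1. pose proof (Hg2 x ltac:(lra)) as [h2 d2].
pose proof (g1_der x h) as d1.
assert (D : is_derive (fun y => g1 y - g2 y) x (ode_rhs P s x (g1 x) - ode_rhs P s x (g2 x))).
{ exact (is_derive_minus g1 g2 x _ _ d1 d2). }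
pose proof (der_mul _ _ x _ _ D D) as D2.
assert (E : forall y, (g1 y - g2 y) * (g1 y - g2 y) = wf y) by (intros; unfold wf; ring).
eapply is_derive_ext. exact E. unfold wf.
replace (2 * kf x * (g1 x - g2 x) ^ 2) with
  ((ode_rhs P s x (g1 x) - ode_rhs P s x (g2 x)) * (g1 x - g2 x) + (g1 x - g2 x) * (ode_rhs P s x (g1 x) - ode_rhs P s x (g2 x))).
exact D2.
unfold kf, ode_rhs. field. repeat split; nra.
Qed.

Lemma near_x0 : exists eta, 0 < eta /\ eta <= (x1 - x0) / 2 /\
  forall x, x0 < x < x0 + eta -> g0 / 2 <= g1 x /\ g0 / 2 <= g2 x.
Proof.
pose proof x1_gt.
destruct (right_lim_eps g1 x0 g0 (cont_at_right g1 x0 g0 (g1_cont x0) g1_x0) (g0 / 2)) as [d1 [Hd1 H1]]. lra.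
destruct (right_lim_eps g2 x0 g0 Hg2lim (g0 / 2)) as [d2 [Hd2 H2]]. lra.
exists (Rmin (Rmin d1 d2) ((x1 - x0) / 2)).
pose proof (Rmin_l (Rmin d1 d2) ((x1 - x0) / 2)). pose proof (Rmin_r (Rmin d1 d2) ((x1 - x0) / 2)).
pose proof (Rmin_l d1 d2). pose proof (Rmin_r d1 d2).
split. repeat apply Rmin_pos; lra. split. auto.
intros x Hx. specialize (H1 x ltac:(lra)). specialize (H2 x ltac:(lra)).
unfold Rabs in H1, H2. destruct Rcase_abs in H1; destruct Rcase_abs in H2; lra.
Qed.

Lemma der_m2 (f : R -> R) x df : is_derive f x df -> is_derive (fun y => - (2 * f y)) x (- (2 * df)).
Proof.
intros H. pose proof (is_derive_scal f x (-2) df H) as H1.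
eapply is_derive_ext. 2: { replace (- (2 * df)) with (-2 * df) by ring. exact H1. }
intros; simpl; ring.
Qed.

Lemma der_exp (f : R -> R) x df : is_derive f x df -> is_derive (fun y => exp (f y)) x (exp (f x) * df).
Proof.
intros H. pose proof (is_derive_comp exp f x (exp (f x)) df (is_derive_exp (f x)) H) as H1.
replace (exp (f x) * df) with (scal df (exp (f x))). exact H1. unfold scal; simpl; unfold mult; simpl; ring.
Qed.

Lemma uniq_eq : forall x, x0 < x < x1 -> g1 x = g2 x.
Proof.
pose proof x1_gt as Hx01.
destruct near_x0 as [eta [He1 [He2 He]]].
set (c := x0 + eta / 2).
assert (Hc : x0 < c < x1) by (unfold c; lra).
set (K := fun x => RInt kf c x).
assert (K_der : forall x, x0 < x < x1 -> is_derive K x (kf x)).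
{ intros x hx. apply (is_derive_RInt kf K c x).
  - assert (0 < Rmin (x - x0) (x1 - x)) by (apply Rmin_pos; lra).
    exists (mkposreal _ H). intros y Hy. change (Rabs (y - x) < Rmin (x - x0) (x1 - x)) in Hy.
    pose proof (Rmin_l (x - x0) (x1 - x)). pose proof (Rmin_r (x - x0) (x1 - x)).
    assert (x0 < y < x1) by (unfold Rabs in Hy; destruct Rcase_abs in Hy; lra).
    apply (RInt_correct (V := R_CompleteNormedModule)).
    apply (ex_RInt_continuous (V := R_CompleteNormedModule)). intros z Hz. apply kf_cont.
    pose proof (Rmin_l c y). pose proof (Rmin_r c y). pose proof (Rmax_l c y). pose proof (Rmax_r c y).
    split. apply Rlt_le_trans with (Rmin c y). apply Rmin_glb_lt; lra. lra.
    apply Rle_lt_trans with (Rmax c y). lra. apply Rmax_lub_lt; lra.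
  - apply kf_cont; auto. }
set (v := fun x => wf x * exp (- (2 * K x))).
assert (v_der : forall x, x0 < x < x1 -> is_derive v x 0).
{ intros x hx. pose proof (der_exp _ x _ (der_m2 K x _ (K_der x hx))) as H1.
  pose proof (der_mul wf (fun y => exp (- (2 * K y))) x _ _ (wf_der x hx) H1) as H2.
  replace 0 with (2 * kf x * wf x * exp (- (2 * K x)) + wf x * (exp (- (2 * K x)) * - (2 * kf x))) by ring.
  exact H2. }
assert (v_const : forall x y, x0 < x < x1 -> x0 < y < x1 -> x < y -> v x = v y).
{ intros x y hx hy hxy. destruct (mvt_open v (fun _ => 0) x y hxy) as [z [_ Hz]].
  - intros; apply v_der; lra.
  - intros z hz. apply exd_cont. eexists. apply v_der. lra.
  - lra. }
assert (v_c : forall x, x0 < x < x1 -> v x = v c).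
{ intros x hx. destruct (Rtotal_order x c) as [h|[h|h]].
  apply v_const; auto. subst; auto. symmetry; apply v_const; auto. }
set (Kb := (1 + P c / (g0 / 2) ^ 2) / (s * x0)).
assert (HPc : 0 < P c) by (apply HPpos; lra).
assert (Kb_pos : 0 < Kb).
{ unfold Kb. apply Rdiv_lt_0_compat. assert (0 < P c / (g0 / 2) ^ 2) by (apply Rdiv_lt_0_compat; nra). lra. nra. }
assert (kb : forall z, x0 < z <= c -> 0 <= kf z <= Kb).
{ intros z hz. destruct (He z ltac:(unfold c in hz; lra)) as [h1 h2].
  assert (HPz : 0 < P z) by (apply HPpos; lra).
  assert (HPzc : P z <= P c) by (apply Pmono; lra).
  assert (Hgg : (g0 / 2) ^ 2 <= g1 z * g2 z) by nra.
  assert (Hgg2 : 0 < (g0 / 2) ^ 2) by nra.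
  assert (A1 : 0 <= P z / (g1 z * g2 z)) by (left; apply Rdiv_lt_0_compat; nra).
  assert (A2 : P z / (g1 z * g2 z) <= P c / (g0 / 2) ^ 2).
  { unfold Rdiv. apply Rmult_le_compat; try lra. left; apply Rinv_0_lt_compat; nra.
    apply Rinv_le_contravar; lra. }
  assert (A3 : 0 < / (s * z)) by (apply Rinv_0_lt_compat; nra).
  assert (A4 : / (s * z) <= / (s * x0)) by (apply Rinv_le_contravar; nra).
  unfold kf, Kb, Rdiv. split. apply Rmult_le_pos; lra.
  apply Rmult_le_compat; lra. }
set (Eb := exp (eta * Kb)).
assert (Eb_pos : 0 < Eb) by apply exp_pos.
assert (vbound : forall x, x0 < x < c -> v c <= wf x * Eb).
{ intros x hx. rewrite <- (v_c x) by lra. unfold v.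
  assert (0 <= wf x) by (unfold wf; apply pow2_ge_0).
  apply Rmult_le_compat_l. auto.
  assert (HK : Rabs (RInt kf x c) <= (c - x) * Kb).
  { apply abs_RInt_le_const. lra.
    apply (ex_RInt_continuous (V := R_CompleteNormedModule)). intros z hz.
    rewrite Rmin_left, Rmax_right in hz by lra. apply kf_cont; lra.
    intros z hz. rewrite Rabs_right. apply kb; lra. apply Rle_ge, kb; lra. }
  assert (HK2 : K x = - RInt kf x c).
  { unfold K. rewrite <- (opp_RInt_swap kf x c). reflexivity.
    apply (ex_RInt_continuous (V := R_CompleteNormedModule)). intros z hz.
    rewrite Rmin_left, Rmax_right in hz by lra. apply kf_cont; lra. }
  unfold Eb. rewrite HK2.
  assert (- (2 * - RInt kf x c) <= eta * Kb).
  { pose proof (Rle_abs (RInt kf x c)).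
    assert ((c - x) * Kb <= eta / 2 * Kb) by (apply Rmult_le_compat_r; unfold c in *; lra). lra. }
  destruct (Req_dec (- (2 * - RInt kf x c)) (eta * Kb)) as [e|ne]. rewrite e; lra.
  left; apply exp_increasing; lra. }
assert (vc0 : v c <= 0).
{ destruct (Rle_dec (v c) 0) as [|hn]; auto. exfalso.
  set (eps := v c). assert (Hep : 0 < eps) by (unfold eps; lra).
  set (r := Rmin (1 / 2) (eps / (8 * Eb))).
  assert (Hr : 0 < r) by (apply Rmin_pos; [lra | apply Rdiv_lt_0_compat; lra]).
  pose proof (Rmin_l (1 / 2) (eps / (8 * Eb))). pose proof (Rmin_r (1 / 2) (eps / (8 * Eb))). fold r in H, H0.
  destruct (right_lim_eps g1 x0 g0 (cont_at_right g1 x0 g0 (g1_cont x0) g1_x0) r Hr) as [d1 [Hd1 H1]].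
  destruct (right_lim_eps g2 x0 g0 Hg2lim r Hr) as [d2 [Hd2 H2]].
  set (x := x0 + Rmin (Rmin d1 d2) (eta / 2) / 2).
  pose proof (Rmin_l (Rmin d1 d2) (eta / 2)). pose proof (Rmin_r (Rmin d1 d2) (eta / 2)).
  pose proof (Rmin_l d1 d2). pose proof (Rmin_r d1 d2).
  assert (0 < Rmin (Rmin d1 d2) (eta / 2)) by (repeat apply Rmin_pos; lra).
  assert (hx : x0 < x < c) by (unfold x, c; lra).
  specialize (H1 x ltac:(unfold x; lra)). specialize (H2 x ltac:(unfold x; lra)).
  assert (Hd : Rabs (g1 x - g2 x) < 2 * r).
  { replace (g1 x - g2 x) with ((g1 x - g0) - (g2 x - g0)) by ring.
    eapply Rle_lt_trans. apply Rabs_sub_le. lra. }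
  assert (Hw : wf x < eps / (2 * Eb)).
  { unfold wf. set (dd := g1 x - g2 x) in *.
    assert (- (2 * r) < dd < 2 * r) by (unfold Rabs in Hd; destruct Rcase_abs in Hd; lra).
    assert (dd ^ 2 < (2 * r) ^ 2) by nra.
    assert ((2 * r) ^ 2 <= 2 * r) by nra.
    assert (2 * r <= eps / (4 * Eb)).
    { replace (eps / (4 * Eb)) with (2 * (eps / (8 * Eb))) by (field; lra). lra. }
    assert (eps / (4 * Eb) < eps / (2 * Eb)).
    { unfold Rdiv. apply Rmult_lt_compat_l. auto. apply Rinv_lt_contravar; nra. }
    lra. }
  pose proof (vbound x hx).
  assert (wf x * Eb < eps / 2).
  { replace (eps / 2) with (eps / (2 * Eb) * Eb) by (field; lra). apply Rmult_lt_compat_r; lra. }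
  unfold eps in *. lra. }
intros x hx.
assert (vx : v x = 0).
{ rewrite (v_c x hx). apply Rle_antisym. auto. unfold v. apply Rmult_le_pos.
  unfold wf; apply pow2_ge_0. left; apply exp_pos. }
unfold v in vx. apply Rmult_integral in vx. destruct vx as [vx|vx].
unfold wf in vx. assert (g1 x - g2 x = 0) by nra. lra.
pose proof (exp_pos (- (2 * K x))). lra.
Qed.

Lemma uniq_false : False.
Proof.
pose proof x1_gt.
destruct (Hg2 x1 ltac:(lra)) as [hp hd].
assert (Hc2 : continuous g2 x1) by (apply g2_cont; lra).
destruct (eps_cont g2 x1 Hc2 (g2 x1 / 2)) as [d1 [Hd1 H1]]. lra.
destruct (eps_cont g1 x1 (g1_contc x1) (g2 x1 / 2)) as [d2 [Hd2 H2]]. lra.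
set (x := x1 - Rmin (Rmin d1 d2) (x1 - x0) / 2).
pose proof (Rmin_l (Rmin d1 d2) (x1 - x0)). pose proof (Rmin_r (Rmin d1 d2) (x1 - x0)).
pose proof (Rmin_l d1 d2). pose proof (Rmin_r d1 d2).
assert (0 < Rmin (Rmin d1 d2) (x1 - x0)) by (repeat apply Rmin_pos; lra).
assert (hx : x0 < x < x1) by (unfold x; lra).
assert (Habs : Rabs (x - x1) < Rmin (Rmin d1 d2) (x1 - x0)).
{ unfold x. replace (x1 - Rmin (Rmin d1 d2) (x1 - x0) / 2 - x1) with (- (Rmin (Rmin d1 d2) (x1 - x0) / 2)) by ring.
  rewrite Rabs_Ropp, Rabs_right; lra. }
specialize (H1 x ltac:(lra)). specialize (H2 x ltac:(lra)).
rewrite g1_x1 in H2. rewrite (uniq_eq x hx) in H2.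
unfold Rabs in H1, H2. destruct Rcase_abs in H1; destruct Rcase_abs in H2; lra.
Qed.

End Uniq.
End WithX.

End WithLp.
End Main.

Theorem lemma1 (s x0 g0 : R) (P : R -> R) :
  0 < s -> 0 < x0 ->
  C2_on_nonneg P ->
  strictly_increasing_nonneg P ->
  P 0 = 0 ->
  (forall x, 0 < x -> 0 < P x) ->
  ex_RInt_gen (fun z => P z * Rpower z (-1 - 2 / s))
    (at_point x0) (Rbar_locally p_infty) ->
  0 < g0 -> g0 < gamma_c P x0 ->
  exists x1 : R, x0 < x1 /\
    (exists g : R -> R, is_pos_solution P s x0 g0 g (Finite x1) /\
        filterlim g (at_left x1) (locally 0)) /\
    (forall (g : R -> R) (b : Rbar), is_pos_solution P s x0 g0 g b ->
        Rbar_le b (Finite x1)).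
Proof.
intros Hs Hx0 HC2 Hinc HP0 HPpos _ Hg0 Hgc0.
assert (Hgc : g0 + g0 ^ 2 < P x0).
{ unfold gamma_c in Hgc0. pose proof (HPpos x0 Hx0).
  assert (HS : sqrt (1 + 4 * P x0) * sqrt (1 + 4 * P x0) = 1 + 4 * P x0) by (apply sqrt_sqrt; lra).
  assert (2 * g0 + 1 < sqrt (1 + 4 * P x0)) by lra.
  nra. }
destruct (Lp_ex s x0 g0 P Hs Hx0 HC2 Hg0 Hgc) as [Lp [HLp0 HLp]].
destruct (picard (Fd s x0 g0 P) x0 (Lf s x0 g0 P Lp) (Bd s x0 g0 P))
  as [X [HX0 [HXc HXd]]].
- apply (Lf_pos s x0 g0 P); auto.
- apply (F_bound s x0 g0 P); auto.
- apply (F_lip s x0 g0 P); auto.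
- apply (F_cont s x0 g0 P); auto.
- pose proof (x1_gt s x0 g0 P Hs Hx0 Hinc Hg0 Hgc X HX0 HXc HXd) as Hx1.
  exists (x1 g0 X). split. auto.
  split.
  + exists (g1 x0 g0 Hg0 X HX0 HXc). split.
    * split. simpl; auto. split. apply (g1_x0 s x0 g0 P Hs Hx0 Hinc Hg0 Hgc X HX0 HXc HXd).
      split. apply cont_at_right. apply (g1_cont s x0 g0 P Hs Hx0 Hinc Hg0 Hgc X HX0 HXc HXd).
      apply (g1_x0 s x0 g0 P Hs Hx0 Hinc Hg0 Hgc X HX0 HXc HXd).
      intros x hx1 hx2. simpl in hx2. split.
      apply (g1_pos s x0 g0 P Hs Hx0 Hinc Hg0 Hgc X HX0 HXc HXd); lra.
      apply (g1_der s x0 g0 P Hs Hx0 Hinc Hg0 Hgc X HX0 HXc HXd); lra.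
    * apply cont_at_left. apply (g1_cont s x0 g0 P Hs Hx0 Hinc Hg0 Hgc X HX0 HXc HXd).
      apply (g1_x1 s x0 g0 P Hs Hx0 Hinc Hg0 Hgc X HX0 HXc HXd).
  + intros g b [Hb [Hgx0 [Hglim Hgd]]].
    destruct b as [b| |]; simpl.
    * destruct (Rle_dec b (x1 g0 X)) as [|hn]; auto. exfalso.
      apply (uniq_false s x0 g0 P Hs Hx0 HC2 Hinc HPpos Hg0 Hgc X HX0 HXc HXd g b); auto. lra.
      intros x hx. apply Hgd; simpl; lra.
    * exfalso.
      apply (uniq_false s x0 g0 P Hs Hx0 HC2 Hinc HPpos Hg0 Hgc X HX0 HXc HXd g (x1 g0 X + 1)); auto. lra.
      intros x hx. apply Hgd; simpl; auto; lra.
    * auto.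
Qed.
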